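(* Let $n$ and $m$ be integers with $n\ge 1$ and $0\le m\le n$, and let $\theta>0$ be real. Then $$S'_{n+1,m+1}(\theta)=\frac{\theta^{m}}{(\theta+1)_n}\,\frac{1}{2\pi i}\int_{\mathcal C_R}\frac{(z+1)_n}{z^{m}}\,\frac{dz}{z-\theta},$$ for every $R>\theta$, where $\mathcal C_R$ is the circle $|z|=R$ in the complex plane, traversed once counterclockwise.
   Context: For a complex number $\alpha$ and an integer $n\ge0$, the Pochhammer symbol is $(\alpha)_0=1$, $(\alpha)_n=\alpha(\alpha+1)\cdots(\alpha+n-1)$. The Stirling numbers of the first kind $S_n^{(k)}$ ($0\le k\le n$) are defined by the polynomial identity $(\theta)_n=\sum_{k=0}^n(-1)^{n-k}S_n^{(k)}\theta^k$. For integers $0\le m\le n$ and real $\theta>0$, define $$S'_{n,m}(\theta)=\frac{1}{(\theta)_n}\sum_{k=m}^n(-1)^{n-k}S_n^{(k)}\theta^k .$$ *)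

(* Defs.v *)
From Stdlib Require Import Reals.
From Coquelicot Require Import Coquelicot.
From mathcomp Require Import all_boot all_algebra.

Set Implicit Arguments.
Unset Strict Implicit.

Definition rising_poly (n : nat) : {poly int} :=
  (\prod_(i < n) ('X + ((i : nat)%:Z)%:P))%R.

(* Stirling numbers of the first kind, defined by
   (theta)_n = sum_k (-1)^(n-k) S_n^(k) theta^k,
   i.e. S_n^(k) = (-1)^(n-k) * [coefficient of X^k in (X)_n]. *)
Definition stirling1 (n k : nat) : int :=
  ((-1) ^+ (n - k) * (rising_poly n)`_k)%R.

Definition int_to_R (z : int) : R :=
  match z with
  | Posz k => INR k
  | Negz k => Ropp (INR (S k))
  end.

Fixpoint poch (a : R) (n : nat) : R :=
  match n with
  | O => R1
  | S k => Rmult (poch a k) (Rplus a (INR k))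
  end.

Fixpoint cpoch (z : C) (n : nat) : C :=
  match n with
  | O => RtoC 1
  | S k => Cmult (cpoch z k) (Cplus z (RtoC (INR k)))
  end.

Fixpoint cpow (z : C) (n : nat) : C :=
  match n with
  | O => RtoC 1
  | S k => Cmult z (cpow z k)
  end.

Definition S' (n m : nat) (theta : R) : R :=
  Rmult (Rinv (poch theta n))
   (sum_f_R0 (fun k => if Nat.leb m k
                       then Rmult (Rmult (pow (Ropp R1) (n - k)) (int_to_R (stirling1 n k)))
                                  (pow theta k)
                       else R0) n).

Definition circle_integral (f : C -> C) (r : R) : C :=
  RInt (V := C_R_CompleteNormedModule)
    (fun t : R => Cmult (f (Cmult (RtoC r) (cos t, sin t)))
                        (Cmult (Cmult Ci (RtoC r)) (cos t, sin t)))
    R0 (Rmult 2 PI).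

(* Main.v *)
Require Import Defs.
From Stdlib Require Import Reals.
From Coquelicot Require Import Coquelicot.
From Stdlib Require Import Lra ZArith Lia.

Module MC.
From mathcomp Require Import all_boot all_algebra zify ssrZ.
From Stdlib Require Import ZArith Lia.

Lemma int_to_R_Z z : int_to_R z = Rdefinitions.IZR (Z_of_int z).
Proof.
destruct z as [k|k]; rewrite /int_to_R /Z_of_int.
- apply RIneq.INR_IZR_INZ.
- rewrite RIneq.INR_IZR_INZ -RIneq.opp_IZR. f_equal. lia.
Qed.

Section S.

Import GRing.Theory.
Local Open Scope ring_scope.

Definition cz (N k : nat) : Z := Z_of_int (nth 0 (rising_poly N : seq int) k).

Lemma cz_S N k : cz N.+1 k =
  (match k with O => 0 | S k' => cz N k' end + cz N k * Z.of_nat N)%Z.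
Proof.
rewrite /cz /rising_poly big_ord_recr /= -/(rising_poly N).
have -> : nth 0 (rising_poly N * ('X + (N%:Z)%:P) : seq int) k =
   (if k is k'.+1 then (rising_poly N)`_k' else 0) + (rising_poly N)`_k * N%:Z.
  rewrite mulrDr coefD coefMX coefMC; by case: k.
rewrite rmorphD rmorphM.
case: k => [|k] /=; reflexivity.
Qed.

Lemma cz_0 k : cz 0 k = if k is O then 1%Z else 0%Z.
Proof.
rewrite /cz /rising_poly big_ord0.
have -> : nth 0 (polyseq (1 : {poly int})) k = (1 : {poly int})`_k by [].
rewrite coef1; case: k => //.
Qed.

Lemma stirling1_Z n k : Z_of_int (stirling1 n k) =
  if odd (n - k) then (- cz n k)%Z else cz n k.
Proof.
rewrite /stirling1 /cz -signr_odd; case: (odd (n - k)) => /=.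
  by rewrite expr1 mulN1r rmorphN.
by rewrite expr0 mul1r.
Qed.

End S.
End MC.

From mathcomp Require Import ssreflect.
Notation cz := MC.cz.
Notation cz_S := MC.cz_S.
Notation cz_0 := MC.cz_0.
Notation stirling1_Z := MC.stirling1_Z.
Notation int_to_R_Z := MC.int_to_R_Z.
Open Scope R_scope.

Definition zp (r : R) (k : Z) (t : R) : C :=
  (powerRZ r k * cos (IZR k * t), powerRZ r k * sin (IZR k * t)).

Lemma C_eq (a b : C) : fst a = fst b -> snd a = snd b -> a = b.
Proof. destruct a, b; simpl; intros -> ->; reflexivity. Qed.

Lemma zp_mul r a b t : r <> 0 -> Cmult (zp r a t) (zp r b t) = zp r (a+b) t.
Proof.
intro Hr. unfold zp, Cmult; simpl. rewrite plus_IZR powerRZ_add //.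
rewrite Rmult_plus_distr_r cos_plus sin_plus. f_equal; ring.
Qed.

Lemma zp_0 r t : zp r 0 t = RtoC 1.
Proof. unfold zp, RtoC; simpl. rewrite Rmult_0_l cos_0 sin_0. f_equal; ring. Qed.

Lemma zp_1 r t : zp r 1 t = Cmult (RtoC r) (cos t, sin t).
Proof. unfold zp, RtoC, Cmult; simpl. rewrite !Rmult_1_l. f_equal; ring. Qed.

Lemma is_RInt_val (f : R -> C) a b l l' : l = l' ->
  is_RInt (V:=C_R_NormedModule) f a b l -> is_RInt (V:=C_R_NormedModule) f a b l'.
Proof. by intros ->. Qed.

Lemma is_RInt_valR (f : R -> R) a b l l' : l = l' ->
  is_RInt f a b l -> is_RInt f a b l'.
Proof. by intros ->. Qed.

Lemma sin_2PIk k : sin (IZR k * (2 * PI)) = 0.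
Proof. apply sin_eq_0_1. exists (2 * k)%Z. rewrite mult_IZR. ring. Qed.

Lemma cos_2PIk k : cos (IZR k * (2 * PI)) = 1.
Proof.
replace (IZR k * (2 * PI)) with (2 * (IZR k * PI)) by ring.
rewrite cos_2a_sin sin_eq_0_1; [ring | exists k; ring].
Qed.

Lemma is_RInt_zp r k : r <> 0 ->
  is_RInt (V:=C_R_NormedModule) (zp r k) 0 (2*PI)
    (if Z.eqb k 0 then RtoC (2*PI) else RtoC 0).
Proof.
intro Hr. destruct (Z.eqb_spec k 0) as [->|Hk].
- eapply is_RInt_val; last first.
  eapply is_RInt_ext; last apply (is_RInt_const (V:=C_R_NormedModule) 0 (2*PI) (RtoC 1)).
  intros x _. by rewrite zp_0.
  rewrite scal_R_Cmult. unfold RtoC, Cmult; simpl. f_equal; ring.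
- have HkR : IZR k <> 0 by apply not_0_IZR.
  apply (is_RInt_fct_extend_pair (U:=R_NormedModule) (V:=R_NormedModule) (zp r k)).
  + eapply is_RInt_valR; last first.
    apply (is_RInt_derive (fun t => powerRZ r k * sin (IZR k * t) / IZR k)
             (fun t => fst (zp r k t))).
    * intros x _. unfold zp; simpl. auto_derive; auto. field; auto.
    * intros x _. apply: (ex_derive_continuous (K:=R_AbsRing) (V:=R_NormedModule)). unfold zp; simpl. auto_derive; auto.
    * unfold minus, plus, opp; simpl. rewrite sin_2PIk !Rmult_0_r sin_0. field; auto.
  + eapply is_RInt_valR; last first.
    apply (is_RInt_derive (fun t => - powerRZ r k * cos (IZR k * t) / IZR k)
             (fun t => snd (zp r k t))).
    * intros x _. unfold zp; simpl. auto_derive; auto. field; auto.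
    * intros x _. apply: (ex_derive_continuous (K:=R_AbsRing) (V:=R_NormedModule)). unfold zp; simpl. auto_derive; auto.
    * unfold minus, plus, opp; simpl. rewrite cos_2PIk Rmult_0_r cos_0. field; auto.
Qed.

Definition hh r th k t : C :=
  Cdiv (Cmult (zp r k t) (zp r 1 t)) (Cminus (zp r 1 t) (RtoC th)).

Lemma zp1_sub_neq r th t : 0 < th < r -> Cminus (zp r 1 t) (RtoC th) <> RtoC 0.
Proof.
intros [H1 H2] E. rewrite zp_1 in E.
unfold Cminus, Cplus, Copp, Cmult, RtoC in E; simpl in E.
injection E; intros E2 E1.
have A1 : r * cos t = th by lra.
have A2 : r * sin t = 0 by lra.
have H := sin2_cos2 t. unfold Rsqr in H.
have : (r * cos t) * (r * cos t) + (r * sin t) * (r * sin t) = r * r.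
{ transitivity (r * r * (sin t * sin t + cos t * cos t)); [ring | rewrite H; ring]. }
rewrite A1 A2. nra.
Qed.

Lemma Cmod_zp r k t : 0 < r -> Cmod (zp r k t) = powerRZ r k.
Proof.
intro Hr. unfold Cmod, zp; simpl.
have -> : powerRZ r k * cos (IZR k * t) * (powerRZ r k * cos (IZR k * t) * 1) +
    powerRZ r k * sin (IZR k * t) * (powerRZ r k * sin (IZR k * t) * 1)
    = powerRZ r k ^ 2.
{ transitivity (powerRZ r k ^ 2 * (Rsqr (sin (IZR k * t)) + Rsqr (cos (IZR k * t)))).
  unfold Rsqr; ring. rewrite sin2_cos2; ring. }
apply sqrt_pow2. apply powerRZ_le. lra.
Qed.

Lemma Cmod_sub_ge r th t : 0 < th < r -> r - th <= Cmod (Cminus (zp r 1 t) (RtoC th)).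
Proof.
intros H.
have Hz : Cmod (zp r 1 t) = r by rewrite Cmod_zp; [simpl; ring | lra].
have := Cmod_triangle (Cminus (zp r 1 t) (RtoC th)) (RtoC th).
have -> : Cplus (Cminus (zp r 1 t) (RtoC th)) (RtoC th) = zp r 1 t by ring.
rewrite Hz Cmod_R Rabs_pos_eq; lra.
Qed.

Lemma hh_bound r th k t : 0 < th < r ->
  Cmod (hh r th k t) <= powerRZ r k * r / (r - th).
Proof.
intro H. unfold hh. rewrite Cmod_div; last by apply zp1_sub_neq.
rewrite Cmod_mult !Cmod_zp; try lra.
have Hp : 0 < powerRZ r k by apply powerRZ_lt; lra.
have := Cmod_sub_ge r th t H. intro Hc.
have -> : powerRZ r 1 = r by simpl; ring.
unfold Rdiv. apply Rmult_le_compat_l.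
- simpl. nra.
- apply Rinv_le_contravar; lra.
Qed.

Lemma ex_RInt_hh r th k : 0 < th < r ->
  ex_RInt (V:=C_R_NormedModule) (hh r th k) 0 (2*PI).
Proof.
intro H.
apply (ex_RInt_fct_extend_pair (U:=R_NormedModule) (V:=R_NormedModule) (hh r th k));
  apply: ex_RInt_continuous; intros x _;
  apply: (ex_derive_continuous (K:=R_AbsRing) (V:=R_NormedModule));
  unfold hh, zp, Cdiv, Cminus, Cmult, Cinv, Cplus, Copp, RtoC; simpl;
  auto_derive.
all: have H2 := sin2_cos2 x; have [_ Hc] := COS_bound x; unfold Rsqr in H2;
  rewrite !Rmult_1_l !Rmult_1_r.
all: have Hp : 0 <= r * th * (1 - cos x) by (apply Rmult_le_pos; nra).
all: repeat split; apply Rgt_not_eq; nra.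
Qed.

Definition JJ r th k : C := RInt (V:=C_R_CompleteNormedModule) (hh r th k) 0 (2*PI).

Lemma hh_rec r th k t : 0 < th < r ->
  hh r th k t = Cplus (zp r k t) (Cmult (RtoC th) (hh r th (k-1) t)).
Proof.
intro H. have Hr : r <> 0 by lra.
have Hn := zp1_sub_neq r th t H.
unfold hh.
have -> : zp r k t = Cmult (zp r (k-1) t) (zp r 1 t).
{ rewrite zp_mul //. f_equal. ring. }
field. exact Hn.
Qed.

Lemma JJ_correct r th k : 0 < th < r ->
  is_RInt (V:=C_R_NormedModule) (hh r th k) 0 (2*PI) (JJ r th k).
Proof. intro H. apply (RInt_correct (V:=C_R_CompleteNormedModule)). by apply ex_RInt_hh. Qed.

Lemma JJ_rec r th k : 0 < th < r ->
  JJ r th k = Cplus (if Z.eqb k 0 then RtoC (2*PI) else RtoC 0) (Cmult (RtoC th) (JJ r th (k-1))).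
Proof.
intro H. have Hr : r <> 0 by lra.
apply (is_RInt_unique (V:=C_R_CompleteNormedModule)).
have H1 := is_RInt_zp r k Hr.
have H2 := is_RInt_scal _ _ _ th _ (JJ_correct r th (k-1) H).
have H3 := is_RInt_plus _ _ _ _ _ _ H1 H2.
eapply is_RInt_ext; last first.
- eapply is_RInt_val; last exact H3. by rewrite scal_R_Cmult.
- intros x _. rewrite (hh_rec r th k x H) scal_R_Cmult. reflexivity.
Qed.

Lemma JJ_fst_bound r th k : 0 < th < r ->
  Rabs (fst (JJ r th k)) <= 2 * PI * (powerRZ r k * r / (r - th)).
Proof.
intro H.
have H1 := is_RInt_fct_extend_fst (U:=R_NormedModule) (V:=R_NormedModule) _ _ _ _ (JJ_correct r th k H).
have := norm_RInt_le_const _ _ _ _ (powerRZ r k * r / (r - th)) _ _ H1.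
rewrite Rminus_0_r. apply.
- have := PI_RGT_0. lra.
- intros x _. eapply Rle_trans; last apply (hh_bound r th k x H).
  eapply Rle_trans; last apply Rmax_Cmod. apply Rmax_l.
Qed.

Lemma JJ_snd_bound r th k : 0 < th < r ->
  Rabs (snd (JJ r th k)) <= 2 * PI * (powerRZ r k * r / (r - th)).
Proof.
intro H.
have H1 := is_RInt_fct_extend_snd (U:=R_NormedModule) (V:=R_NormedModule) _ _ _ _ (JJ_correct r th k H).
have := norm_RInt_le_const _ _ _ _ (powerRZ r k * r / (r - th)) _ _ H1.
rewrite Rminus_0_r. apply.
- have := PI_RGT_0. lra.
- intros x _. eapply Rle_trans; last apply (hh_bound r th k x H).
  eapply Rle_trans; last apply Rmax_Cmod. apply Rmax_r.
Qed.

Lemma zero_of_bound x K q : 0 <= q < 1 -> (forall N, Rabs x <= K * q ^ N) -> x = 0.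
Proof.
intros Hq HB.
destruct (Req_dec x 0) as [|Hx]; first done.
have Hax : 0 < Rabs x by apply Rabs_pos_lt.
have HK : 0 < K. { have := HB 0%nat. simpl. lra. }
have Hq' : Rabs q < 1 by rewrite Rabs_pos_eq; lra.
destruct (pow_lt_1_zero q Hq' (Rabs x / K)) as [N HN].
{ apply Rdiv_lt_0_compat; lra. }
have := HN N (le_n N). rewrite Rabs_pos_eq; last by apply pow_le; lra.
intro H1. have := HB N. intro H2.
have E : K * (Rabs x / K) = Rabs x by field; lra.
have := Rmult_lt_compat_l K _ _ HK H1. rewrite E. lra.
Qed.

Lemma JJ_neg_iter r th N : 0 < th < r ->
  JJ r th (-1) = Cmult (RtoC (th ^ N)) (JJ r th (- Z.of_nat (S N))).
Proof.
intro H. induction N as [|N IH].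
- simpl. by rewrite Cmult_1_l.
- rewrite IH (JJ_rec r th (- Z.of_nat (S N))) //.
  have -> : Z.eqb (- Z.of_nat (S N)) 0 = false by apply Z.eqb_neq; lia.
  have -> : (- Z.of_nat (S N) - 1 = - Z.of_nat (S (S N)))%Z by lia.
  rewrite /= !RtoC_mult. ring.
Qed.

Lemma JJ_m1 r th : 0 < th < r -> JJ r th (-1) = RtoC 0.
Proof.
intro H.
have Hr : 0 < r by lra.
have Hq : 0 <= th / r < 1.
{ split. apply Rlt_le, Rdiv_lt_0_compat; lra.
  apply (Rmult_lt_reg_r r); first lra. unfold Rdiv. rewrite Rmult_assoc Rinv_l; lra. }
have HK : forall N, th ^ N * (2 * PI * (powerRZ r (- Z.of_nat (S N)) * r / (r - th)))
   = (2 * PI / (r - th)) * (th / r) ^ N.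
{ intro N. rewrite powerRZ_neg' -pow_powerRZ. unfold Rdiv.
  rewrite Rpow_mult_distr pow_inv. simpl.
  have Hn : r ^ N <> 0 by apply pow_nonzero; lra.
  field. repeat split; try lra; exact Hn. }
apply C_eq; change (fst (RtoC 0)) with 0; change (snd (RtoC 0)) with 0.
- apply (zero_of_bound _ (2 * PI / (r - th)) (th / r) Hq).
  intro N. rewrite (JJ_neg_iter r th N H). set J := JJ r th _. simpl. rewrite -HK Rmult_0_l Rminus_0_r Rabs_mult.
  rewrite Rabs_pos_eq; last by apply pow_le; lra.
  apply Rmult_le_compat_l; first by apply pow_le; lra.
  apply JJ_fst_bound, H.
- apply (zero_of_bound _ (2 * PI / (r - th)) (th / r) Hq).
  intro N. rewrite (JJ_neg_iter r th N H). set J := JJ r th _. simpl. rewrite -HK Rmult_0_l Rplus_0_r Rabs_mult.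
  rewrite Rabs_pos_eq; last by apply pow_le; lra.
  apply Rmult_le_compat_l; first by apply pow_le; lra.
  apply JJ_snd_bound, H.
Qed.

Lemma JJ_nat r th p : 0 < th < r -> JJ r th (Z.of_nat p) = RtoC (2 * PI * th ^ p).
Proof.
intro H. induction p as [|p IH].
- rewrite (JJ_rec r th (Z.of_nat 0) H) /=. rewrite (JJ_m1 r th H).
  apply C_eq; simpl; ring.
- rewrite (JJ_rec r th (Z.of_nat (S p)) H).
  have -> : Z.eqb (Z.of_nat (S p)) 0 = false by apply Z.eqb_neq; lia.
  have -> : (Z.of_nat (S p) - 1 = Z.of_nat p)%Z by lia.
  rewrite IH. apply C_eq; simpl; ring.
Qed.

Lemma JJ_negS r th p : 0 < th < r -> JJ r th (- Z.of_nat (S p)) = RtoC 0.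
Proof.
intro H. induction p as [|p IH].
- by apply JJ_m1.
- have := JJ_rec r th (- Z.of_nat (S p)) H.
  have -> : Z.eqb (- Z.of_nat (S p)) 0 = false by apply Z.eqb_neq; lia.
  have -> : (- Z.of_nat (S p) - 1 = - Z.of_nat (S (S p)))%Z by lia.
  rewrite IH. set J := JJ r th _. intro E.
  have Hth : th <> 0 by lra.
  apply C_eq; apply (f_equal fst) in E as E1; apply (f_equal snd) in E as E2;
   simpl in E1, E2 |- *.
  + apply (Rmult_eq_reg_l th); last done. nra.
  + apply (Rmult_eq_reg_l th); last done. nra.
Qed.

Lemma JJ_diff r th j m : 0 < th < r ->
  JJ r th (Z.of_nat j - Z.of_nat m) = RtoC (if Nat.leb m j then 2 * PI * th ^ (j - m) else 0).
Proof.
intro H. destruct (Nat.leb_spec m j) as [Hm|Hm].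
- have -> : (Z.of_nat j - Z.of_nat m = Z.of_nat (j - m))%Z by lia.
  by apply JJ_nat.
- have -> : (Z.of_nat j - Z.of_nat m = - Z.of_nat (S (m - j - 1)))%Z by lia.
  by apply JJ_negS.
Qed.

Fixpoint csum (f : nat -> C) (N : nat) : C :=
  match N with O => f O | S N => Cplus (csum f N) (f (S N)) end.

Lemma csum_ext f g N : (forall k, (k <= N)%nat -> f k = g k) -> csum f N = csum g N.
Proof.
induction N as [|N IH]; intro E; simpl.
- apply E; lia.
- rewrite IH; [|intros; apply E; lia]. rewrite (E (S N)) //.
Qed.

Lemma csum_mult_r f c N : Cmult (csum f N) c = csum (fun k => Cmult (f k) c) N.
Proof. induction N as [|N IH]; simpl; [done|]. rewrite -IH. ring. Qed.

Lemma csum_mult_l f c N : Cmult c (csum f N) = csum (fun k => Cmult c (f k)) N.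
Proof. induction N as [|N IH]; simpl; [done|]. rewrite -IH. ring. Qed.

Lemma csum_plus f g N : csum (fun k => Cplus (f k) (g k)) N = Cplus (csum f N) (csum g N).
Proof. induction N as [|N IH]; simpl; [done|]. rewrite IH. ring. Qed.

Lemma csum_shift f N : csum f (S N) = Cplus (f O) (csum (fun k => f (S k)) N).
Proof. induction N as [|N IH]; simpl; [done|]. simpl in IH. rewrite IH. ring. Qed.

Lemma csum_RtoC g N : csum (fun k => RtoC (g k)) N = RtoC (sum_f_R0 g N).
Proof. induction N as [|N IH]; simpl; [done|]. rewrite IH. by rewrite RtoC_plus. Qed.

Lemma is_RInt_csum (f : nat -> R -> C) (l : nat -> C) a b N :
  (forall k, is_RInt (V:=C_R_NormedModule) (f k) a b (l k)) ->
  is_RInt (V:=C_R_NormedModule) (fun t => csum (fun k => f k t) N) a b (csum l N).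
Proof.
intro H. induction N as [|N IH]; simpl; first by apply H.
exact (is_RInt_plus _ _ _ _ _ _ IH (H (S N))).
Qed.

Lemma is_RInt_Cmult_l (f : R -> C) (c l : C) a b :
  is_RInt (V:=C_R_NormedModule) f a b l ->
  is_RInt (V:=C_R_NormedModule) (fun t => Cmult c (f t)) a b (Cmult c l).
Proof.
intro H.
have H1 := is_RInt_fct_extend_fst (U:=R_NormedModule) (V:=R_NormedModule) _ _ _ _ H.
have H2 := is_RInt_fct_extend_snd (U:=R_NormedModule) (V:=R_NormedModule) _ _ _ _ H.
apply (is_RInt_fct_extend_pair (U:=R_NormedModule) (V:=R_NormedModule) (fun t => Cmult c (f t))).
- have HS := is_RInt_plus _ _ _ _ _ _ (is_RInt_scal _ _ _ (fst c) _ H1)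
            (is_RInt_scal _ _ _ (- snd c) _ H2).
  eapply is_RInt_valR; last (eapply is_RInt_ext; last exact HS).
  + rewrite /plus /scal /= /mult /=. ring.
  + intros x _. rewrite /plus /scal /= /mult /=. ring.
- have HS := is_RInt_plus _ _ _ _ _ _ (is_RInt_scal _ _ _ (fst c) _ H2)
            (is_RInt_scal _ _ _ (snd c) _ H1).
  eapply is_RInt_valR; last (eapply is_RInt_ext; last exact HS).
  + rewrite /plus /scal /= /mult /=. ring.
  + intros x _. rewrite /plus /scal /= /mult /=. ring.
Qed.

Definition AA N k := IZR (cz N k).

Lemma AA_S N k : AA (S N) k = (match k with O => 0 | S k' => AA N k' end) + AA N k * INR N.
Proof.
rewrite /AA cz_S plus_IZR mult_IZR -INR_IZR_INZ. by destruct k.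
Qed.

Lemma AA_0 k : AA 0 k = match k with O => 1 | S _ => 0 end.
Proof. rewrite /AA cz_0. by destruct k. Qed.

Lemma AA_big N k : (N < k)%nat -> AA N k = 0.
Proof.
revert k. induction N as [|N IH]; intros k Hk.
- rewrite AA_0. destruct k; [lia|done].
- rewrite AA_S. destruct k as [|k]; first lia.
  rewrite IH; last lia. rewrite IH; last lia. ring.
Qed.

Lemma AA_S0 N : AA (S N) 0 = 0.
Proof.
induction N as [|N IH].
- rewrite AA_S AA_0 /=. ring.
- rewrite AA_S IH. ring.
Qed.

Lemma csum_S f N : csum f (S N) = Cplus (csum f N) (f (S N)).
Proof. reflexivity. Qed.

Lemma cpoch_S w N : cpoch w (S N) = Cmult (cpoch w N) (Cplus w (RtoC (INR N))).
Proof. reflexivity. Qed.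

Lemma cpoch_expand w N : cpoch w N = csum (fun k => Cmult (RtoC (AA N k)) (cpow w k)) N.
Proof.
induction N as [|N IH].
- rewrite /= AA_0. apply C_eq; simpl; ring.
- transitivity (csum (fun k => Cplus (Cmult (RtoC (match k with O => 0 | S k' => AA N k' end)) (cpow w k))
      (Cmult (RtoC (AA N k * INR N)) (cpow w k))) (S N)); last first.
  { apply csum_ext; intros k _. rewrite AA_S RtoC_plus. ring. }
  rewrite csum_plus csum_shift.
  rewrite (csum_S (fun k => Cmult (RtoC (AA N k * INR N)) (cpow w k))).
  rewrite (AA_big N (S N)); last lia.
  rewrite cpoch_S IH csum_mult_r.
  rewrite -(csum_ext (fun k => Cplus (Cmult (RtoC (AA N k)) (cpow w (S k)))
                        (Cmult (RtoC (AA N k * INR N)) (cpow w k)))); last first.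
  { intros k _. rewrite RtoC_mult /=. ring. }
  rewrite csum_plus.
  have -> : RtoC (0 * INR N) = RtoC 0 by f_equal; ring.
  ring.
Qed.

Lemma cpoch_shift w n : cpoch w (S n) = Cmult w (cpoch (Cplus w (RtoC 1)) n).
Proof.
induction n as [|n IH].
- rewrite /=. apply C_eq; simpl; ring.
- rewrite cpoch_S IH cpoch_S S_INR !RtoC_plus. ring.
Qed.

Lemma cpoch_coef z n : z <> RtoC 0 ->
  cpoch (Cplus z (RtoC 1)) n = csum (fun k => Cmult (RtoC (AA (S n) (S k))) (cpow z k)) n.
Proof.
intro Hz.
have E : Cmult z (cpoch (Cplus z (RtoC 1)) n) =
         Cmult z (csum (fun k => Cmult (RtoC (AA (S n) (S k))) (cpow z k)) n).
{ rewrite -cpoch_shift cpoch_expand csum_shift AA_S0 csum_mult_l.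
  rewrite (csum_ext (fun k => Cmult (RtoC (AA (S n) (S k))) (cpow z (S k)))
            (fun k => Cmult z (Cmult (RtoC (AA (S n) (S k))) (cpow z k)))).
  - ring.
  - intros k _. simpl. ring. }
transitivity (Cmult (Cinv z) (Cmult z (cpoch (Cplus z (RtoC 1)) n))).
- field. exact Hz.
- rewrite E. field. exact Hz.
Qed.

Lemma cpow_zp r t j : r <> 0 -> cpow (zp r 1 t) j = zp r (Z.of_nat j) t.
Proof.
intro Hr. induction j as [|j IH].
- by rewrite zp_0.
- rewrite /= IH zp_mul //. f_equal. lia.
Qed.

Lemma zp_neq0 r k t : 0 < r -> zp r k t <> RtoC 0.
Proof.
intros Hr E. have := Cmod_zp r k t Hr. rewrite E Cmod_0.
have := powerRZ_lt r k Hr. lra.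
Qed.

Lemma integrand_eq r th n m t : 0 < th < r ->
  Cmult ((fun z => Cdiv (Cdiv (cpoch (Cplus z (RtoC 1)) n) (cpow z m)) (Cminus z (RtoC th)))
           (Cmult (RtoC r) (cos t, sin t)))
        (Cmult (Cmult Ci (RtoC r)) (cos t, sin t))
  = csum (fun j => Cmult (Cmult (RtoC (AA (S n) (S j))) Ci) (hh r th (Z.of_nat j - Z.of_nat m) t)) n.
Proof.
intro H. have Hr : 0 < r by lra.
have Hr0 : r <> 0 by lra.
have -> : Cmult (Cmult Ci (RtoC r)) (cos t, sin t) = Cmult Ci (zp r 1 t) by rewrite zp_1; ring.
rewrite -zp_1 /=.
have Hz := zp_neq0 r 1 t Hr.
have Hd := zp1_sub_neq r th t H.
rewrite cpoch_coef //.
have -> : forall S P Q W, Cmult (Cdiv (Cdiv S P) Q) W = Cmult S (Cmult (Cmult (Cinv P) (Cinv Q)) W).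
{ intros. unfold Cdiv. ring. }
rewrite csum_mult_r. apply csum_ext. intros j _.
rewrite !cpow_zp //.
have Hm := zp_neq0 r (Z.of_nat m) t Hr.
have -> : zp r (Z.of_nat j) t = Cmult (zp r (Z.of_nat j - Z.of_nat m) t) (zp r (Z.of_nat m) t).
{ rewrite zp_mul //. f_equal. ring. }
unfold hh. field. split; assumption.
Qed.

Lemma sign_cancel p c : (- R1) ^ p * IZR (if ssrnat.odd p then (- c)%Z else c) = IZR c.
Proof.
induction p as [|p IH]; simpl; first ring.
destruct (ssrnat.odd p); simpl in IH |- *; rewrite ?opp_IZR in IH |- *; lra.
Qed.

Lemma poch_shift a n : poch a (S n) = a * poch (a + 1) n.
Proof.
induction n as [|n IH].
- simpl. ring.
- change (poch a (S (S n))) with (poch a (S n) * (a + INR (S n))).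
  rewrite IH. simpl poch. rewrite S_INR. ring.
Qed.

Lemma poch_pos a n : 0 < a -> 0 < poch a n.
Proof.
intro Ha. induction n as [|n IH]; simpl; first lra.
apply Rmult_lt_0_compat; first done. have := pos_INR n. lra.
Qed.

Lemma real_part n m th : 0 < th ->
  S' (n + 1) (m + 1) th =
  th ^ m / poch (th + 1) n *
  sum_f_R0 (fun j => AA (S n) (S j) * (if Nat.leb m j then th ^ (j - m) else 0)) n.
Proof.
intro Hth. unfold S'. rewrite !Nat.add_1_r.
rewrite (sum_eq _ (fun k => if Nat.leb (S m) k then AA (S n) k * th ^ k else 0)); last first.
{ intros k _. destruct (Nat.leb (S m) k); last done.
  rewrite int_to_R_Z stirling1_Z sign_cancel. reflexivity. }
rewrite decomp_sum; last lia. simpl pred.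
have -> : (if Nat.leb (S m) 0 then AA (S n) 0 * th ^ 0 else 0) = 0 by reflexivity.
rewrite Rplus_0_l.
rewrite (sum_eq _ (fun j => AA (S n) (S j) * (if Nat.leb m j then th ^ (j - m) else 0) * th ^ (S m)));
  last first.
{ intros j _. change (Nat.leb (S m) (S j)) with (Nat.leb m j).
  destruct (Nat.leb_spec m j) as [Hmj|Hmj]; last ring.
  replace (th ^ S j) with (th ^ (S m + (j - m))) by (f_equal; lia). rewrite pow_add. ring. }
rewrite -scal_sum poch_shift.
have HP := poch_pos (th + 1) n ltac:(lra).
simpl. field. lra.
Qed.

Theorem theorem1 (n m : nat) (theta r : R) :
  (1 <= n)%nat -> (m <= n)%nat -> (0 < theta)%R -> (theta < r)%R ->
  RtoC (S' (n + 1) (m + 1) theta) =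
  (RtoC (theta ^ m / poch (theta + 1) n) * / (RtoC (2 * PI) * Ci) *
   circle_integral
     (fun z => cpoch (z + RtoC 1) n / cpow z m / (z - RtoC theta)) r)%C.
Proof.
intros Hn Hm Hth Hr.
have H : 0 < theta < r by lra.
set V := sum_f_R0 (fun j => AA (S n) (S j) * (if Nat.leb m j then theta ^ (j - m) else 0)) n.
have Hval : csum (fun k => Cmult (Cmult (RtoC (AA (S n) (S k))) Ci)
                  (JJ r theta (Z.of_nat k - Z.of_nat m))) n
            = Cmult (RtoC (2 * PI)) (Cmult Ci (RtoC V)).
{ rewrite (csum_ext _ (fun k => Cmult (Cmult (RtoC (2 * PI)) Ci)
       (RtoC (AA (S n) (S k) * (if Nat.leb m k then theta ^ (k - m) else 0))))).
  - rewrite -csum_mult_l csum_RtoC. fold V. ring.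
  - intros k _. rewrite JJ_diff //. destruct (Nat.leb m k); rewrite !RtoC_mult; ring. }
have HI : circle_integral (fun z => (cpoch (z + RtoC 1) n / cpow z m / (z - RtoC theta))%C) r
          = Cmult (RtoC (2 * PI)) (Cmult Ci (RtoC V)).
{ unfold circle_integral.
  apply (is_RInt_unique (V:=C_R_CompleteNormedModule)).
  eapply is_RInt_ext.
  { intros x _. symmetry. apply (integrand_eq r theta n m x H). }
  rewrite -Hval.
  apply is_RInt_csum. intro k. apply is_RInt_Cmult_l. apply JJ_correct. exact H. }
rewrite HI real_part //. fold V.
have H2 : RtoC (2 * PI) <> RtoC 0.
{ intro E. apply (f_equal fst) in E. simpl in E. have := PI_RGT_0. lra. }
have Hi : Ci <> RtoC 0.
{ intro E. apply (f_equal snd) in E. simpl in E. lra. }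
rewrite RtoC_mult. field. split; assumption.
Qed.
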